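(* Let ${\mathbb K}$ be a field, $n\geqslant 2$, $N$ and $r$ positive integers. Let $L$ be a set of lines of $\mathrm{AG}_n({\mathbb K})$, let $D\subseteq\mathrm{PG}_{n-1}({\mathbb K})$ be the set of directions of the lines of $L$, and let $S$ be a set of points of $\mathrm{AG}_n({\mathbb K})$ such that every line of $L$ is incident with at least $N$ points of $S$. If $U$ is a subspace of ${\mathbb K}[X_1,\ldots,X_n]$ of polynomials of degree at most $rN-1$ with the property that $f^*\notin I_r(D)$ for all non-zero $f\in U$, then $$\binom{2r+n-2}{n}|S|\geqslant\dim U.$$
   Context: The direction of an affine line $\{u+\lambda v\}$ is the point $\langle v\rangle$ of $\mathrm{PG}_{n-1}({\mathbb K})$. For $j,c\in({\mathbb Z}_{\geqslant0})^n$ the $j$-Hasse derivative of $X^c=\prod_i X_i^{c_i}$ is $\partial^j(X^c)=\prod_{i=1}^n\binom{c_i}{j_i}X_i^{c_i-j_i}$ (with $\binom{a}{b}=0$ if $b>a$), extended linearly to polynomials; $\mathrm{wt}(j)=\sum_i j_i$. A polynomial $f$ has a zero of multiplicity $m$ at a point $u\in{\mathbb K}^n$ if $(\partial^j f)(u)=0$ for all $j$ with $\mathrm{wt}(j)\leqslant m-1$. $I_r(D)$ denotes the ideal of homogeneous polynomials of ${\mathbb K}[X_1,\ldots,X_n]$ which have zeros of multiplicity at least $r$ at all points of $D$ (i.e. at vectors $v$ with $\langle v\rangle\in D$). For $f\in{\mathbb K}[X_1,\ldots,X_n]$, $f^*$ denotes the sum of the terms of $f$ of highest total degree; degree means total degree.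 *)

(* Defs.v *)
From HB Require Import structures.
From mathcomp Require Import all_boot all_order all_algebra.
From mathcomp Require Export mpoly.

Set Implicit Arguments.
Unset Strict Implicit.
Unset Printing Implicit Defensive.

Import GRing.Theory.
Local Open Scope ring_scope.

Section Defs.
Variables (K : fieldType) (n : nat).

Definition pt := 'rV[K]_n.

Definition peval (f : {mpoly K[n]}) (x : pt) : K := f.@[fun i => x 0 i].

Definition on_line (u v x : pt) : Prop := exists lam : K, x = u + lam *: v.

(* The j-Hasse derivative:
   d^j (X^c) = prod_i binom(c_i, j_i) X^(c - j), extended linearly.
   (When some j_i > c_i the binomial product is 0, so the truncated
   monomial subtraction is harmless.) *)
Definition hasse (j : 'X_{1..n}) (f : {mpoly K[n]}) : {mpoly K[n]} :=
  \sum_(c <- msupp f)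
     (f@_c * ((\prod_(i < n) 'C(c i, j i))%N)%:R) *: 'X_[(c - j)%MM].

Definition zero_mult (f : {mpoly K[n]}) (m : nat) (u : pt) : Prop :=
  forall j : 'X_{1..n}, (mdeg j < m)%N -> peval (hasse j f) u = 0.

(* A set of lines is given by parametrisations (u, v), v <> 0. *)
Definition lineset := pt * pt -> Prop.

(* Directions: the set D of points <v> of PG_{n-1}(K); a vector w
   represents a point of D iff w is a nonzero multiple of the direction
   vector of some line of L. *)
Definition in_directions (L : lineset) (w : pt) : Prop :=
  exists u v (c : K), L (u, v) /\ c != 0 /\ w = c *: v.

Definition in_Ir (r : nat) (L : lineset) (f : {mpoly K[n]}) : Prop :=
  (exists d, f \is d.-homog) /\
  forall w, in_directions L w -> zero_mult f r w.

Definition fstar (f : {mpoly K[n]}) : {mpoly K[n]} :=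
  \sum_(c <- msupp f | mdeg c == (msize f).-1) f@_c *: 'X_[c].

Definition subspace (U : {mpoly K[n]} -> Prop) : Prop :=
  U 0 /\ forall (a : K) f g, U f -> U g -> U (a *: f + g).

Definition lin_indep (s : seq {mpoly K[n]}) : Prop :=
  forall c : 'I_(size s) -> K,
    \sum_(i < size s) c i *: s`_i = 0 -> forall i, c i = 0.

Definition dim_le (U : {mpoly K[n]} -> Prop) (d : nat) : Prop :=
  forall s : seq {mpoly K[n]}, (forall f, f \in s -> U f) -> lin_indep s ->
    (size s <= d)%N.

End Defs.

(* Main.v *)
Require Import Defs.
From HB Require Import structures.
From mathcomp Require Import all_boot all_order all_algebra.
From mathcomp Require Import mpoly ssrcomplements.
From mathcomp Require Import zify ring lra.
Set Implicit Arguments. Unset Strict Implicit. Unset Printing Implicit Defensive.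
Import GRing.Theory.
Local Open Scope ring_scope.
Section H.
Variables (K : fieldType) (n : nat).
Implicit Types (p q f g : {mpoly K[n]}) (c j i m : 'X_{1..n}).

Definition bc (c j : 'X_{1..n}) : nat := (\prod_(l < n) 'C(c l, j l))%N.

Lemma hasseE j p k : (msize p <= k)%N ->
  hasse j p = \sum_(c : 'X_{1..n < k}) (p@_c * (bc c j)%:R) *: 'X_[c - j].
Proof.
move=> lt_pk; pose I : subFinType _ := 'X_{1..n < k}.
rewrite /hasse (big_mksub I) //=; first last.
  by move=> x /msize_mdeg_lt /leq_trans; apply.
  by rewrite msupp_uniq.
by rewrite big_rmcond //= => x; move/memN_msupp_eq0 ->; rewrite mul0r scale0r.
Qed.

Lemma hasse_is_linear j : linear (@hasse K n j).
Proof.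
move=> a p q /=; pose k := (msize p + msize q + msize (a *: p + q))%N.
rewrite !(@hasseE j _ k) ?/k; try lia.
rewrite scaler_sumr -big_split /=; apply: eq_bigr => c _.
by rewrite mcoeffD mcoeffZ scalerA -scalerDl mulrDl mulrA.
Qed.

HB.instance Definition _ j :=
  GRing.isLinear.Build K {mpoly K[n]} {mpoly K[n]} _ (@hasse K n j) (hasse_is_linear j).

Lemma hasseX j m : @hasse K n j 'X_[m] = (bc m j)%:R *: 'X_[m - j].
Proof. by rewrite /hasse msuppX big_seq1 mcoeffX eqxx mul1r. Qed.

Lemma binC3 (c j i : nat) :
  ('C(c, j) * 'C(c - j, i) = 'C(c, i + j) * 'C(i + j, i))%N.
Proof.
case: (leqP j c) => hjc; last first.
  rewrite (bin_small hjc) (@bin_small c (i + j)) ?mul0n //; lia.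
case: (leqP i (c - j)) => hic; last first.
  rewrite (bin_small hic) muln0 (@bin_small c (i + j)) ?mul0n //; lia.
have h1 := bin_fact hjc.
have h2 := bin_fact hic.
have hij : (i + j <= c)%N by lia.
have h3 := bin_fact hij.
have h4 := bin_fact (leq_addr j i).
have e1 : (i + j - i = j)%N by lia.
have e2 : (c - j - i = c - (i + j))%N by lia.
rewrite e1 in h4; rewrite e2 in h2.
have hpos : (0 < i`! * j`! * (c - (i + j))`!)%N by rewrite !muln_gt0 !fact_gt0.
apply/eqP; rewrite -(eqn_pmul2r hpos); apply/eqP.
transitivity (c`!); last first.
  by rewrite -h3 -h4; ring.
by rewrite -h1 -h2; ring.
Qed.
Local Notation hs := (@hasse K n).

Lemma bc_comp c j i : (bc c j * bc (c - j) i = bc c (i + j) * bc (i + j) i)%N.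
Proof.
rewrite /bc -!big_split /=; apply: eq_bigr => l _.
by rewrite !mnmE binC3.
Qed.

Lemma bc_eq0 c j : ~~ (j <= c)%MM -> bc c j = 0%N.
Proof.
move=> h; have [l hl] : exists l, (c l < j l)%N.
  apply/existsP; move: h; apply: contraR; rewrite negb_exists => /forallP H.
  by apply/mnm_lepP => l; move: (H l); rewrite -leqNgt.
by rewrite /bc (bigD1 l) //= bin_small // mul0n.
Qed.

Lemma mdegBle c j : (j <= c)%MM -> mdeg (c - j) = (mdeg c - mdeg j)%N.
Proof.
move=> h; rewrite -{2}(submK h) mdegD; lia.
Qed.

Lemma lem_mdeg c j : (j <= c)%MM -> (mdeg j <= mdeg c)%N.
Proof. by move=> h; rewrite -(submK h) mdegD leq_addl. Qed.

Lemma mnm_le_mdeg (m : 'X_{1..n}) l : (m l <= mdeg m)%N.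
Proof. by rewrite mdegE (bigD1 l) //= leq_addr. Qed.

Lemma hasse_comp i j f : hs i (hs j f) = (bc (i + j) i)%:R *: hs (i + j) f.
Proof.
rewrite !(@hasseE _ f (msize f)) // linear_sum scaler_sumr /=.
apply: eq_bigr => c _; rewrite linearZ /= hasseX !scalerA submDA [(j + i)%MM]addmC.
congr (_ *: _); rewrite -mulrA -natrM bc_comp natrM; ring.
Qed.
Lemma mmap1_taylor (R : comNzRingType) (A B : 'I_n -> R) (c : 'X_{1..n}) k :
  (mdeg c < k)%N ->
  mmap1 (fun l => A l + B l) c =
  \sum_(i : 'X_{1..n < k}) (bc c i)%:R * mmap1 A (c - i) * mmap1 B i.
Proof.
case: k => [//|k] hck.
pose G (l : 'I_n) (e : nat) : R := ('C(c l, e))%:R * A l ^+ (c l - e) * B l ^+ e.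
have step l : (A l + B l) ^+ (c l) = \sum_(e < k.+1) G l e.
  have hl : ((c l).+1 <= k.+1)%N by exact: leq_ltn_trans (mnm_le_mdeg c l) hck.
  rewrite exprDn (big_ord_widen _ (fun e => A l ^+ (c l - e) * B l ^+ e *+ 'C(c l, e)) hl).
  rewrite big_mkcond /=; apply: eq_bigr => e _.
  case: ifP => he; first by rewrite /G mulr_natl mulrnAl.
  by rewrite /G bin_small ?mul0r //; rewrite ltnNge -ltnS he.
rewrite /mmap1 (eq_bigr _ (fun l _ => step l)) bigA_distr_bigA /=.
have hi (i : 'X_{1..n < k.+1}) l : (i l < k.+1)%N.
  exact: leq_ltn_trans (mnm_le_mdeg _ l) (bmdeg i).
pose h (i : 'X_{1..n < k.+1}) : {ffun 'I_n -> 'I_k.+1} := [ffun l => inord (i l)].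
have hinj : injective h.
  move=> i1 i2 /ffunP e; apply: val_inj; apply/mnmP => l.
  by move: (e l); rewrite !ffunE => /(congr1 val) /=; rewrite !inordK.
transitivity (\sum_(i : 'X_{1..n < k.+1}) \prod_(l < n) G l (i l)); last first.
  apply: eq_bigr => i _; rewrite /bc natr_prod -!big_split /=.
  by apply: eq_bigr => l _; rewrite /G mnmBE.
rewrite (bigID (fun phi => phi \in [set h x | x in setT])) /=.
rewrite [X in _ + X]big1 ?addr0; last first.
  move=> phi hphi.
  have [l hl] : exists l, (c l < phi l)%N.
    apply/existsP; rewrite -[X in is_true X]negbK negb_exists; apply/negP => /forallP H.
    have hm : (mdeg [multinom (phi l : nat) | l < n] < k.+1)%N.
      apply: leq_ltn_trans hck; rewrite !mdegE; apply: leq_sum => l _.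
      by rewrite mnmE; move: (H l); rewrite -leqNgt.
    move/negP: hphi; apply; apply/imsetP; exists (BMultinom hm) => //.
    apply/ffunP => l; rewrite ffunE /=; apply: val_inj; rewrite /= mnmE inordK //.
  by rewrite (bigD1 l) //= /G bin_small // !mul0r.
rewrite big_imset /=; last by move=> x y _ _; apply: hinj.
apply: eq_big => [i|i _]; first by rewrite in_setT.
by apply: eq_bigr => l _; rewrite ffunE inordK.
Qed.
Definition ev (A : 'I_n -> {poly K}) (g : {mpoly K[n]}) : {poly K} :=
  mmap (@polyC K) A g.

Lemma ev_hasse A j p k : (msize p <= k)%N ->
  ev A (hs j p) =
  \sum_(c : 'X_{1..n < k}) (p@_c * (bc c j)%:R)%:P * mmap1 A (c - j).
Proof.
move=> hk; rewrite /ev (hasseE j hk) raddf_sum /=; apply: eq_bigr => c _.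
by rewrite mmapZ mmapX.
Qed.

Lemma ev_taylor A B g k : (msize g <= k)%N ->
  ev (fun l => A l + B l) g =
  \sum_(i : 'X_{1..n < k}) ev A (hs i g) * mmap1 B i.
Proof.
move=> hk.
under [RHS]eq_bigr => i _ do rewrite (ev_hasse _ _ hk) mulr_suml.
rewrite /ev (mmapE k) //.
rewrite exchange_big /=; apply: eq_bigr => c _.
rewrite (mmap1_taylor A B (bmdeg c)) mulr_sumr; apply: eq_bigr => i _.
by rewrite rmorphM /= rmorph_nat; ring.
Qed.

Lemma ev_const (x : 'I_n -> K) g : ev (fun l => (x l)%:P) g = (g.@[x])%:P.
Proof.
rewrite /ev /mmap mevalE rmorph_sum /=; apply: eq_bigr => c _.
by rewrite rmorphM rmorph_prod /mmap1; congr (_ * _); apply: eq_bigr => l _; rewrite rmorphXn.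
Qed.
Lemma coefM_top (p q : {poly K}) a b :
  (size p <= a.+1)%N -> (size q <= b.+1)%N ->
  (size (p * q)%R <= (a + b).+1)%N /\ (p * q)`_(a + b) = p`_a * q`_b.
Proof.
move=> hp hq; split.
  by apply: leq_trans (size_mul_leq _ _) _; lia.
have hab : (a < (a + b).+1)%N by lia.
rewrite coefM (bigD1 (Ordinal hab)) //= addKn big1 ?addr0 // => i /eqP hi.
have [hia|hia] := ltnP i a.
  rewrite [q`__]nth_default ?mulr0 //; apply: leq_trans hq _; lia.
rewrite [p`__]nth_default ?mul0r //; apply: leq_trans hp _.
have : (nat_of_ord i) <> a by move=> h; apply: hi; apply: val_inj.
lia.
Qed.

Lemma prod_top (P : 'I_n -> {poly K}) (w : 'I_n -> K) (e : 'X_{1..n}) :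
  (forall l, size (P l) <= 2)%N -> (forall l, (P l)`_1 = w l) ->
  (size (mmap1 P e) <= (mdeg e).+1)%N /\
  (mmap1 P e)`_(mdeg e) = \prod_(l < n) w l ^+ e l.
Proof.
move=> hs1 hc1.
have hpow l k : (size (P l ^+ k) <= k.+1)%N /\ (P l ^+ k)`_k = w l ^+ k.
  elim: k => [|k [ih1 ih2]]; first by rewrite !expr0 size_poly1 coefC.
  have [h1 h2] := coefM_top ih1 (hs1 l).
  rewrite addn1 -mulrC -exprS in h1 h2; split => //.
  by rewrite h2 ih2 hc1 -exprSr.
rewrite /mmap1 mdegE.
elim: (index_enum _) => [|l s [ih1 ih2]]; first by rewrite !big_nil size_poly1 coefC.
rewrite !big_cons.
have [h1 h2] := coefM_top (proj1 (hpow l (e l))) ih1.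
by split => //; rewrite h2 ih2 (proj2 (hpow l (e l))).
Qed.
Lemma fstarE f :
  fstar f = \sum_(c : 'X_{1..n < msize f})
              (if mdeg c == (msize f).-1 then f@_c else 0) *: 'X_[c].
Proof.
pose I : subFinType _ := 'X_{1..n < msize f}.
rewrite /fstar big_mkcond /= (big_mksub I) //=; first last.
  by move=> x /msize_mdeg_lt.
  by rewrite msupp_uniq.
rewrite big_rmcond //=; last first.
  by move=> x; move/memN_msupp_eq0 ->; rewrite scale0r; case: ifP.
by apply: eq_bigr => c _; case: ifP => _; rewrite ?scale0r.
Qed.

Lemma fstar_homog f : fstar f \is (msize f).-1.-homog.
Proof.
rewrite fstarE rpred_sum // => c _; case: eqP => h.
  by rewrite rpredZ // dhomogX; apply/eqP.
by rewrite scale0r rpred0.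
Qed.

Lemma lead_line f j (u w : 'I_n -> K) :
  let P := ev (fun l => (u l)%:P + (w l)%:P * 'X) (hs j f) in
  (size P <= msize f - mdeg j)%N /\
  P`_((msize f).-1 - mdeg j) = (hs j (fstar f)).@[w].
Proof.
pose Pl l := (u l)%:P + (w l)%:P * 'X : {poly K}.
have hs1 l : (size (Pl l) <= 2)%N.
  apply/leq_sizeP => e he; rewrite coefD coefC coefCM coefX.
  have -> : (e == 1)%N = false by apply/eqP; lia.
  have -> : (e == 0)%N = false by apply/eqP; lia.
  by rewrite mulr0 addr0.
have hc1 l : (Pl l)`_1 = w l by rewrite coefD coefC coefCM coefX /= mulr1 add0r.
move=> P; rewrite /P (ev_hasse _ _ (leqnn (msize f))).
split.
  apply/leq_sizeP => e he; rewrite coef_sum big1 // => c _.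
  rewrite coefCM.
  have [hjc|hjc] := boolP (j <= c)%MM; last by rewrite bc_eq0 // mulr0 mul0r.
  have [hsz _] := prod_top (c - j) hs1 hc1.
  rewrite [_`_e]nth_default ?mulr0 //; apply: leq_trans hsz _.
  rewrite mdegBle //; have := bmdeg c; have := lem_mdeg hjc; lia.
rewrite fstarE [hs j _]linear_sum raddf_sum coef_sum /=; apply: eq_bigr => c _.
rewrite linearZ /= hasseX mevalZ mevalZ mevalX coefCM.
have [hjc|hjc] := boolP (j <= c)%MM; last by rewrite bc_eq0 // mulr0n !(mulr0, mul0r).
have [hsz htop] := prod_top (c - j) hs1 hc1.
have hdeg := bmdeg c; have hjd := lem_mdeg hjc; rewrite mdegBle // in hsz htop.
case: eqP => hc.
  by rewrite hc in htop; rewrite htop; ring.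
rewrite [_`__]nth_default ?mulr0 ?mul0r //; apply: leq_trans hsz _.
have : (mdeg c < (msize f).-1)%N.
  move: hdeg hc; rewrite -!subn1; lia.
move: hjd; rewrite -!subn1; lia.
Qed.
Lemma ev_eq A A' g : A =1 A' -> ev A g = ev A' g.
Proof.
move=> h; rewrite /ev /mmap; apply: eq_bigr => c _; congr (_ * _).
by rewrite /mmap1; apply: eq_bigr => l _; rewrite h.
Qed.

Lemma dvdp_sumX (I : Type) (s : seq I) (F : I -> {poly K}) (d : {poly K}) :
  (forall y, d %| F y) -> d %| \sum_(y <- s) F y.
Proof.
move=> h; elim/big_rec: _ => [|y q _ hq]; first exact: dvdp0.
by rewrite dvdp_add.
Qed.

Lemma mult_line g (u w x : 'I_n -> K) (lam : K) (m : nat) :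
  (forall l, x l = u l + lam * w l) ->
  (forall i : 'X_{1..n}, (mdeg i < m)%N -> (hs i g).@[x] = 0) ->
  ('X - lam%:P) ^+ m %| ev (fun l => (u l)%:P + (w l)%:P * 'X) g.
Proof.
move=> hx hz.
rewrite (@ev_eq _ (fun l => (x l)%:P + (w l)%:P * ('X - lam%:P))); last first.
  by move=> l /=; rewrite hx polyCD polyCM; ring.
rewrite (ev_taylor _ _ (leqnn (msize g))); apply: dvdp_sumX => i.
rewrite ev_const.
have [hi|hi] := ltnP (mdeg i) m.
  by rewrite hz // mul0r dvdp0.
apply: dvdp_mull.
have -> : mmap1 (fun l => (w l)%:P * ('X - lam%:P)) i =
          (\prod_(l < n) w l ^+ i l)%:P * ('X - lam%:P) ^+ mdeg i.
  rewrite /mmap1 rmorph_prod /= mdegE -prodrXr -big_split /=.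
  by apply: eq_bigr => l _; rewrite exprMn rmorphXn.
by apply: dvdp_mull; apply: dvdp_exp2l.
Qed.
Lemma roots_zero (P : {poly K}) (ls : seq K) (m : nat) : uniq ls ->
  (forall a, a \in ls -> ('X - a%:P) ^+ m %| P) ->
  (size P <= m * size ls)%N -> P = 0.
Proof.
move=> hu hd hs.
have hQ : (\prod_(a <- ls) ('X - a%:P)) ^+ m %| P.
  elim: ls hu hd {hs} => [|a ls ih] /= hu hd.
    by rewrite big_nil expr1n dvd1p.
  case/andP: hu => hal hu.
  rewrite big_cons exprMn Gauss_dvdp; last first.
    apply: coprimep_expl; apply: coprimep_expr.
    by rewrite coprimep_sym coprimep_XsubC root_prod_XsubC.
  rewrite hd ?mem_head //=; apply: ih => //.
  by move=> b hb; apply: hd; rewrite in_cons hb orbT.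
apply/eqP; apply/negPn/negP => hP.
have := dvdp_leq hP hQ.
have := size_exp (\prod_(a <- ls) ('X - a%:P)) m.
rewrite size_prod_XsubC /= => e1 h2.
have h0 : size ((\prod_(a <- ls) ('X - a%:P)) ^+ m) = 0%N.
  move: e1 h2 hs; set z := size ((\prod_(a <- ls) ('X - a%:P)) ^+ m); case: z => //= z => e1 h2 h3.
  by have := leq_trans h2 h3; rewrite e1 mulnC ltnn.
move/eqP: h0; rewrite size_poly_eq0 => /eqP h0.
by rewrite h0 dvd0p in hQ; rewrite hQ in hP.
Qed.
Lemma line_params (u w : pt K n) (T : seq (pt K n)) :
  uniq T -> (forall x, x \in T -> on_line u w x) ->
  exists ls : seq K, [/\ uniq ls, size ls = size T &
     forall a, a \in ls -> u + a *: w \in T].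
Proof.
elim: T => [|x T ih] /=; first by exists [::].
case/andP => hx hu hon.
have [ls [h1 h2 h3]] : exists ls : seq K, [/\ uniq ls, size ls = size T &
     forall a, a \in ls -> u + a *: w \in T].
  by apply: ih => // y hy; apply: hon; rewrite in_cons hy orbT.
have [lam hlam] := hon x (mem_head _ _).
exists (lam :: ls); split => /=; last 1 first.
- move=> a; rewrite in_cons => /orP [/eqP ->|/h3 h]; first by rewrite -hlam mem_head.
  by rewrite in_cons h orbT.
- rewrite h1 andbT; apply/negP => /h3; rewrite -hlam; exact/negP.
- by rewrite h2.
Qed.

Lemma fstar_vanish f (r N : nat) (Sp T : seq (pt K n)) (u w : pt K n) :
  (msize f <= r * N)%N ->
  (forall x, x \in Sp -> forall j : 'X_{1..n}, (mdeg j < (2 * r).-1)%N ->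
       peval (hs j f) x = 0) ->
  uniq T -> {subset T <= Sp} -> (N <= size T)%N ->
  (forall x, x \in T -> on_line u w x) ->
  forall j : 'X_{1..n}, (mdeg j < r)%N -> peval (hs j (fstar f)) w = 0.
Proof.
move=> hdeg hvan huT hTS hNT hon j hj.
have [ls [hls1 hls2 hls3]] := line_params huT hon.
have [hsize hcoef] := lead_line f j (fun l => u 0 l) (fun l => w 0 l).
set P := ev _ _ in hsize hcoef.
suff hP : P = 0 by rewrite hP coef0 in hcoef; rewrite /peval -hcoef.
apply: (@roots_zero _ ls ((2 * r).-1 - mdeg j)) => //.
  move=> a ha; apply: (@mult_line _ _ _ (fun l => (u + a *: w) 0 l)).
    by move=> l; rewrite !mxE.
  move=> i hi; rewrite hasse_comp mevalZ.
  have := hvan _ (hTS _ (hls3 _ ha)) (i + j)%MM; rewrite /peval => -> //.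
    by rewrite mulr0.
  rewrite mdegD; move: hi hj; rewrite -!subn1; lia.
apply: leq_trans hsize _; rewrite hls2.
have h1 : (r * N <= ((2 * r).-1 - mdeg j) * size T)%N.
  apply: leq_mul => //; move: hj; rewrite -!subn1; lia.
lia.
Qed.
Lemma card_bmnm D : (#|{: 'X_{1..n < D.+1}}| <= 'C(D + n, n))%N.
Proof.
pose hom (j : 'X_{1..n < D.+1}) : 'X_{1..n.+1} :=
  [multinom (if unlift ord0 l is Some l' then j l' else (D - mdeg j)%N) | l < n.+1].
have homl (j : 'X_{1..n < D.+1}) (l : 'I_n) : hom j (lift ord0 l) = j l by rewrite mnmE liftK.
have hdeg (j : 'X_{1..n < D.+1}) : mdeg (hom j) = D.
  rewrite mdegE big_ord_recl /= mnmE unlift_none.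
  under eq_bigr => l _ do rewrite homl.
  rewrite -mdegE; have := bmdeg j; lia.
have hinj : injective hom.
  move=> j1 j2 e; apply: val_inj; apply/mnmP => l.
  by rewrite -!homl e.
have -> : 'C(D + n, n) = 'C(D + n, D) by rewrite -bin_sub ?leq_addl // addnK.
rewrite cardE -(size_map hom).
rewrite -size_basis; apply: uniq_leq_size.
  by rewrite map_inj_uniq ?enum_uniq.
move=> m /mapP [j _ ->]; rewrite -basis_cover; apply/eqP; exact: hdeg.
Qed.
End H.
Theorem theorem3p1 (K : fieldType) (n N r : nat)
  (hn : (2 <= n)%N) (hN : (0 < N)%N) (hr : (0 < r)%N)
  (L : lineset K n)
  (hL : forall u v, L (u, v) -> v != 0)
  (S : seq (pt K n)) (hS : uniq S)
  (hinc : forall u v, L (u, v) ->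
     exists T : seq (pt K n), [/\ uniq T, {subset T <= S}, (N <= size T)%N &
        forall x, x \in T -> on_line u v x])
  (U : {mpoly K[n]} -> Prop)
  (hU : subspace U)
  (hdeg : forall f, U f -> (msize f <= r * N)%N)
  (hstar : forall f, U f -> f != 0 -> ~ in_Ir r L (fstar f)) :
  dim_le U ('C(2 * r + n - 2, n) * size S)%N.
Proof.
move=> s hsU hind.
set D := (2 * r - 2)%N.
rewrite leqNgt; apply/negP => hlt.
pose C := ('I_(size S) * 'X_{1..n < D.+1})%type.
pose cond (c : C) (g : {mpoly K[n]}) := peval (hasse (bmnm c.2) g) S`_(c.1).
pose A : 'M[K]_(size s, #|{: C}|) := \matrix_(i, k) cond (enum_val k) s`_i.
have hcard : (#|{: C}| < size s)%N.
  rewrite card_prod card_ord; apply: leq_ltn_trans hlt.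
  have e : (2 * r + n - 2 = D + n)%N by rewrite /D; lia.
  by rewrite e mulnC leq_mul2r card_bmnm orbT.
have hker : kermx A != 0.
  rewrite -mxrank_eq0 mxrank_ker subn_eq0 -ltnNge.
  exact: leq_ltn_trans (rank_leq_col A) hcard.
pose x := nz_row (kermx A).
have hx0 : x != 0 by rewrite nz_row_eq0.
have hxA : x *m A = 0 by apply/sub_kermxP; exact: nz_row_sub.
pose a (i : 'I_(size s)) := x 0 i.
pose f := \sum_(i < size s) a i *: s`_i.
have hf0 : f != 0.
  apply/negP => /eqP hf; move/negP: hx0; apply; apply/eqP/rowP => i.
  by rewrite mxE; apply: (hind a hf).
have hUf : U f.
  rewrite /f; elim/big_rec: _ => [|i g _ hg]; first exact: hU.1.
  by apply: hU.2 => //; apply: hsU; apply: mem_nth.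
have hcondf c : cond c f = 0.
  have := congr1 (fun M : 'rV_ _ => M 0 (enum_rank c)) hxA.
  rewrite /= !mxE => <-; rewrite /cond /f [hasse _ _]linear_sum /peval raddf_sum /=.
  apply: eq_bigr => i _; rewrite linearZ /= mevalZ mxE enum_rankK.
  by [].
have hvan : forall y, y \in S -> forall j : 'X_{1..n}, (mdeg j < (2 * r).-1)%N ->
    peval (hasse j f) y = 0.
  move=> y hy j hj.
  have hj' : (mdeg j < D.+1)%N by rewrite /D; move: hj; rewrite -subn1; lia.
  have hi : (index y S < size S)%N by rewrite index_mem.
  have := hcondf (Ordinal hi, BMultinom hj').
  by rewrite /cond /= nth_index.
apply: (hstar f hUf hf0); split.
  by exists (msize f).-1; exact: fstar_homog.
move=> w [u [v [c [hLuv [hc0 ->]]]]].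
have [T [huT hTS hNT hon]] := hinc u v hLuv.
move=> j hj.
apply: (fstar_vanish (hdeg f hUf) hvan huT hTS hNT _ hj).
move=> y /hon [lam ->]; exists (lam / c).
by rewrite scalerA mulfVK.
Qed.
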